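(* The class of all bounded lattices with a unary operation $'$, $(L,\vee,\wedge,{}',0,1)$, in which the Sasaki operations form an adjoint pair coincides with the class of bounded lattices with complementation satisfying the identities $x\vee y'\approx y'\vee\big((x\vee y')\wedge y\big)$ and $x\wedge y\approx x\wedge\big((x\wedge y)\vee x'\big)$; in particular it is a variety.
   Context: A complementation is a unary operation $'$ with $x\vee x'\approx1$ and $x\wedge x'\approx0$. The Sasaki operations are $x\odot y=(x\vee y')\wedge y$ and $x\to y=x'\vee(x\wedge y)$; they form an adjoint pair if for all $x,y,z$: $x\odot y\le z$ iff $x\le y\to z$. *)

(* Defs.v *)
From mathcomp Require Import all_boot all_order.
Set Implicit Arguments. Unset Strict Implicit. Unset Printing Implicit Defensive.
Import Order.Theory.
Local Open Scope order_scope.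

(* Bounded lattices are MathComp's [tbLatticeType d]: join [`|`], meet [`&`],
   bottom [\bot] (= 0), top [\top] (= 1). The unary operation ' is [c : L -> L]. *)

Section Sasaki.
Context {disp : Order.disp_t} {L : tbLatticeType disp}.

Definition complementation (c : L -> L) : Prop :=
  forall x : L, x `|` c x = \top /\ x `&` c x = \bot.

Definition sasaki_prod (c : L -> L) (x y : L) : L := (x `|` c y) `&` y.

Definition sasaki_imp (c : L -> L) (x y : L) : L := c x `|` (x `&` y).

Definition sasaki_adjoint (c : L -> L) : Prop :=
  forall x y z : L, sasaki_prod c x y <= z <-> x <= sasaki_imp c y z.

End Sasaki.

(* Main.v *)
Require Import Defs.
From mathcomp Require Import all_boot all_order.
Import Order.Theory.
Local Open Scope order_scope.

Theorem mainTheorem3 (disp : Order.disp_t) (L : tbLatticeType disp) (c : L -> L) :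
  sasaki_adjoint c <->
  [/\ complementation c,
      (forall x y : L, x `|` c y = c y `|` ((x `|` c y) `&` y)) &
      (forall x y : L, x `&` y = x `&` ((x `&` y) `|` c x))].
Proof.
rewrite /sasaki_adjoint /sasaki_prod /sasaki_imp /complementation; split.
- move=> H; split.
  + move=> x; split.
    * apply/eqP; rewrite eq_le lex1 /=.
      have := (proj1 (H \top x x)); rewrite join1x meet1x lexx => /(_ isT).
      by rewrite joinC meetxx.
    * apply/eqP; rewrite eq_le le0x andbT.
      have := (proj2 (H (c x) x \bot)); rewrite meetx0 joinx0 lexx => /(_ isT).
      by rewrite joinxx meetC.
  + move=> x y; apply/eqP; rewrite eq_le; apply/andP; split.
    * rewrite leUx leUl andbT.
      have := (proj1 (H x y ((x `|` c y) `&` y))) => /(_ (lexx _)).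
      move/le_trans; apply.
      by rewrite leU2 // leIr.
    * by rewrite leUx leUr leIl.
  + move=> x y; apply/eqP; rewrite eq_le; apply/andP; split.
    * by rewrite lexI leIl leUl.
    * rewrite lexI leIl /=.
      have := (proj2 (H (c x `|` (x `&` y)) x y)) => /(_ (lexx _)).
      apply: le_trans; rewrite meetC leI2 //.
      by rewrite joinAC joinxx joinC.
- case=> _ h1 h2 x y z; split.
  + move=> Hp; apply: (le_trans (leUl x (c y))); rewrite h1.
    by rewrite leU2 // lexI leIr.
  + move=> Hx; apply: (le_trans (y := y `&` z)); last exact: leIr.
    rewrite [X in _ <= X]h2 meetC leI2 //.
    by rewrite leUx leUr andbT joinC.
Qed.
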